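(* Let $(S,\mathsf d)$ be a complete separable metric space and $\mathbf p$ a Borel probability measure on $S$; let $\varepsilon>0$, $k\in\mathbb{N}$, and let $X_1,\dots,X_k$ be i.i.d. with law $\mathbf p$. Let $C_1,\dots,C_k$ be pairwise disjoint sets with $C_i\subset B(X_i,\varepsilon)$ and $\bigcup_iC_i=\bigcup_iB(X_i,\varepsilon)$, and set \[\mathbf p^{k,\varepsilon}:=\frac{1}{\sum_{i=1}^k\mathbf p(C_i)}\sum_{i=1}^k\mathbf p(C_i)\delta_{X_i}.\] Then $\mathbb E[\mathrm d_{BL}(\mathbf p,\mathbf p^{k,\varepsilon})]\le\varepsilon\,p_{\varepsilon,k}+2(1-p_{\varepsilon,k})$.
   Context: $B(x,\varepsilon)=\{y:\mathsf d(x,y)<\varepsilon\}$. $p_{\varepsilon,k}:=\mathbb P(X\in\bigcup_{i=1}^kB(X_i,\varepsilon))$ with $X,X_1,\dots,X_k$ i.i.d. with law $\mathbf p$. For bounded Lipschitz $\varphi$, $\|\varphi\|_{BL}:=\|\varphi\|_\infty+\mathrm{Lip}(\varphi)$, and $\mathrm d_{BL}(\mathbf p,\mathbf p'):=\sup\{|\int\varphi\,d\mathbf p-\int\varphi\,d\mathbf p'|:\|\varphi\|_{BL}\le1\}$. *)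

(* Defs.v *)
From HB Require Import structures.
From mathcomp Require Import all_boot all_order all_algebra.
From mathcomp Require Import all_classical all_reals all_analysis.
Set Implicit Arguments. Unset Strict Implicit. Unset Printing Implicit Defensive.
Import Order.TTheory GRing.Theory Num.Theory.
Local Open Scope classical_set_scope.
Local Open Scope ring_scope.

Section metric.
Context {R : realType} {S : Type}.
Variable d : S -> S -> R.

Definition is_metric : Prop :=
  (forall x y, d x y = 0 <-> x = y) /\
  (forall x y, d x y = d y x) /\
  (forall x y z, d x z <= d x y + d y z).

Definition dball (x : S) (e : R) : set S := [set y | d x y < e].

Definition d_open (A : set S) : Prop :=
  forall x, A x -> exists2 e : R, 0 < e & dball x e `<=` A.

Definition d_complete : Prop :=
  forall u : nat -> S,
    (forall e : R, 0 < e -> exists N : nat, forall m n, (N <= m)%N -> (N <= n)%N ->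
        d (u m) (u n) < e) ->
    exists l : S, forall e : R, 0 < e -> exists N : nat, forall n, (N <= n)%N ->
        d (u n) l < e.

Definition d_separable : Prop :=
  exists D : set S, countable D /\
    forall x (e : R), 0 < e -> exists2 y, D y & d x y < e.

Definition supnorm (phi : S -> R) : \bar R :=
  ereal_sup [set (`|phi x|)%:E | x in [set: S]].

Definition lipconst (phi : S -> R) : \bar R :=
  ereal_inf [set L%:E | L in [set L : R | 0 <= L /\
     forall x y, `|phi x - phi y| <= L * d x y]].

Definition BLnorm (phi : S -> R) : \bar R := (supnorm phi + lipconst phi)%E.

End metric.

Section dBL.
Context {dS : measure_display} {S : measurableType dS} {R : realType}.
Variable d : S -> S -> R.

Definition dBL (mu nu : set S -> \bar R) : \bar R :=
  ereal_sup [set `| (\int[mu]_x (phi x)%:E - \int[nu]_x (phi x)%:E)%E |%E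
            | phi in [set phi : S -> R | (BLnorm d phi <= 1)%E]].

(* the empirical-type measure
   p^{k,eps} = (1 / sum_i p(C_i)) sum_i p(C_i) delta_{X_i},
   given the points xs and the cells C (all p(C_i) are finite) *)
Definition pke (p : set S -> \bar R) (k : nat) (xs : 'I_k -> S)
    (C : 'I_k -> set S) : set S -> \bar R :=
  fun A => (\sum_(i < k)
     (fine (p (C i)) / \sum_(j < k) fine (p (C j)))%:E * \d_(xs i) A)%E.

End dBL.

Definition mutual_indep {dO dS : measure_display} {O : measurableType dO}
    {S : measurableType dS} {R : realType} {I : finType}
    (P : probability O R) (Y : I -> O -> S) : Prop :=
  forall A : I -> set S, (forall i, measurable (A i)) ->
    P (\bigcap_(i in [set: I]) (Y i @^-1` A i)) =
    (\prod_(i : I) P (Y i @^-1` A i))%E.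

Definition extfam {O S : Type} {k : nat} (X0 : O -> S) (X : 'I_k -> O -> S)
    : option 'I_k -> O -> S :=
  fun o => match o with None => X0 | Some i => X i end.

(* Main.v *)
Require Import Defs.
From HB Require Import structures.
From mathcomp Require Import all_boot all_order all_algebra.
From mathcomp Require Import all_classical all_reals all_analysis.
From mathcomp Require Import measurable_realfun lebesgue_integral_fubini.
From mathcomp Require Import ring lra.
Import Order.TTheory GRing.Theory Num.Theory.
Local Open Scope classical_set_scope.
Local Open Scope ring_scope.
Set Implicit Arguments. Unset Strict Implicit.

Lemma bigcupT_big (I : finType) T (F : I -> set T) :
  \bigcup_(i in [set: I]) F i = \big[setU/set0]_(i : I) F i.
Proof.
apply/seteqP; split => x.
- by case=> i _ Fx; rewrite (bigD1 i) //=; left.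
- elim/big_rec: _ => // i A _ IH [Fx|Ax]; [by exists i|exact: IH].
Qed.

Lemma le_integral_nm d (T : measurableType d) (R : realType)
  (mu : {measure set T -> \bar R}) (f g : T -> \bar R) :
  (forall x, 0 <= f x)%E -> (forall x, f x <= g x)%E ->
  (\int[mu]_x f x <= \int[mu]_x g x)%E.
Proof.
move=> f0 fg.
have g0 x : (0 <= g x)%E by apply: le_trans (fg x).
rewrite /integral !patch_setT.
have -> : ((fun x => f x)^\- = cst 0)%E.
  by apply/funext => x; apply: (@ge0_funenegE _ _ setT) => //; rewrite in_setT.
have -> : ((fun x => g x)^\- = cst 0)%E.
  by apply/funext => x; apply: (@ge0_funenegE _ _ setT) => //; rewrite in_setT.
have -> : ((fun x => f x)^\+ = f)%E.
  by apply/funext => x; apply: (@ge0_funeposE _ _ setT) => //; rewrite in_setT.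
have -> : ((fun x => g x)^\+ = g)%E.
  by apply/funext => x; apply: (@ge0_funeposE _ _ setT) => //; rewrite in_setT.
apply: leeB => //; apply: ereal_sup_le => _ [h hf <-]; exists h => //= x.
exact: le_trans (hf x) (fg x).
Qed.

Lemma dBL_ge0 dS (S : measurableType dS) (R : realType) (d : S -> S -> R)
  (mu nu : set S -> \bar R) : (0 <= dBL d mu nu)%E.
Proof.
apply: (@le_trans _ _ `|(\int[mu]_x (0:R)%:E - \int[nu]_x (0:R)%:E)|%E).
  exact: abse_ge0.
apply: ereal_sup_ubound; exists (fun=> 0%R) => //.
rewrite /BLnorm; apply: (@le_trans _ _ (0 + 0)%E); last by rewrite adde0 lee01.
apply: leeD.
  by apply: ge_ereal_sup => _ [x _ <-]; rewrite normr0.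
apply: ge_ereal_inf; exists 0%:E => //; exists 0%R => //; split => // x y.
by rewrite subrr normr0 mul0r.
Qed.


Lemma BL_props (R : realType) (dS : measure_display) (S : measurableType dS)
  (d : S -> S -> R) (Hmetric : is_metric d) (phi : S -> R) :
  (BLnorm d phi <= 1)%E ->
  (forall x, `|phi x| <= 1) /\ (forall x y, `|phi x - phi y| <= d x y).
Proof.
move=> hB.
have lip0 : (0 <= lipconst d phi)%E.
  by apply: le_ereal_inf_tmp => _ [L [L0 _] <-]; rewrite lee_fin.
have sup1 : (supnorm phi <= 1)%E.
  by apply: le_trans hB; rewrite /BLnorm leeDl.
have b x : `|phi x| <= 1.
  by rewrite -lee_fin; apply: le_trans sup1; apply: ereal_sup_ubound; exists x.
split => // x y.
have sup0 : (0 <= supnorm phi)%E.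
  apply: (@le_trans _ _ (`|phi x|%:E)); first by rewrite lee_fin.
  by apply: ereal_sup_ubound; exists x.
have lip1 : (lipconst d phi <= 1)%E.
  by apply: le_trans hB; rewrite /BLnorm leeDr.
have [dxx [dsym tri]] := Hmetric.
have d0 : 0 <= d x y.
  have := tri x y x; rewrite (proj2 (dxx x x)) // (dsym y x); lra.
apply/ler_addgt0Pr => e e0.
pose t := e / (d x y + 1).
have t0 : 0 < t by rewrite divr_gt0 // ltr_wpDl.
have te : t * (d x y + 1) = e by rewrite /t mulfVK // gt_eqF // ltr_wpDl.
have : (lipconst d phi < (1 + t)%:E)%E.
  by apply: le_lt_trans lip1 _; rewrite lte_fin ltrDl.
case/ereal_inf_lt => _ [L [L0 HL] <-]; rewrite lte_fin => Llt.
apply: le_trans (HL x y) _.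
nra.
Qed.

Lemma lip_meas (R : realType) (dS : measure_display) (S : measurableType dS)
  (d : S -> S -> R) (Hborel : (@measurable _ S) = <<s d_open d >>) (phi : S -> R) :
  (forall x y, `|phi x - phi y| <= d x y) -> measurable_fun setT phi.
Proof.
move=> lip.
apply: (measurability _ (measurable_realfun.RGenOInfty.measurableE R)).
move=> _ [_ [a ->] <-].
rewrite setTI Hborel; apply: sub_sigma_algebra => y /=; rewrite in_itv /= andbT => ay.
exists (phi y - a); first by rewrite subr_gt0.
move=> z; rewrite /dball /= => dyz; rewrite in_itv /= andbT.
have := ler_distlDr (lip y z); lra.
Qed.
Lemma int_pke_ge0 (R : realType) dS (S : measurableType dS) (p : probability S R) k
  (xs : 'I_k -> S) (Cs : 'I_k -> set S) (F : S -> \bar R) :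
  measurable_fun setT F -> (forall x, 0 <= F x)%E ->
  (\int[pke p xs Cs]_x F x =
    \sum_(i < k) (fine (p (Cs i)) / \sum_(j < k) fine (p (Cs j)))%:E * F (xs i))%E.
Proof.
move=> mF F0.
set Zs := \sum_(j < k) fine (p (Cs j)).
have c0 i : 0 <= fine (p (Cs i)) / Zs.
  by rewrite divr_ge0 // ?sumr_ge0 // => *; apply: fine_ge0.
pose m_ (n : nat) : {measure set S -> \bar R} :=
  match (insub n : option 'I_k) with
  | Some i => mscale (NngNum (c0 i)) \d_(xs i)
  | None => mzero end.
have -> : pke p xs Cs = msum m_ k.
  by apply/funext => A; rewrite /pke /msum; apply: eq_bigr => i _; rewrite /m_ valK.
rewrite ge0_integral_measure_sum //.
apply: eq_bigr => i _; rewrite /m_ valK ge0_integral_mscale //= integral_dirac //.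
by rewrite diracT mul1e.
Qed.

Lemma pke_measure (R : realType) dS (S : measurableType dS) (p : probability S R) k
  (xs : 'I_k -> S) (Cs : 'I_k -> set S) :
  exists m : {measure set S -> \bar R}, pke p xs Cs = m.
Proof.
set Zs := \sum_(j < k) fine (p (Cs j)).
have c0 i : 0 <= fine (p (Cs i)) / Zs.
  by rewrite divr_ge0 // ?sumr_ge0 // => *; apply: fine_ge0.
pose m_ (n : nat) : {measure set S -> \bar R} :=
  match (insub n : option 'I_k) with
  | Some i => mscale (NngNum (c0 i)) \d_(xs i)
  | None => mzero end.
exists (msum m_ k).
by apply/funext => A; rewrite /pke /msum; apply: eq_bigr => i _; rewrite /m_ valK.
Qed.

Lemma int_pke (R : realType) dS (S : measurableType dS) (p : probability S R) k
  (xs : 'I_k -> S) (Cs : 'I_k -> set S) (phi : S -> R) :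
  measurable_fun setT phi ->
  (\int[pke p xs Cs]_x (phi x)%:E =
    (\sum_(i < k) (fine (p (Cs i)) / \sum_(j < k) fine (p (Cs j))) * phi (xs i))%:E)%E.
Proof.
move=> mphi.
have mphiE : measurable_fun setT (EFin \o phi) by exact/measurable_EFinP.
have [m mE] := pke_measure p xs Cs.
rewrite mE integralE -mE.
change ((\int[pke p xs Cs]_x (EFin \o phi)^\+ x - \int[pke p xs Cs]_x (EFin \o phi)^\- x)%E = 
  (\sum_(i < k) (fine (p (Cs i)) / \sum_(j < k) fine (p (Cs j))) * phi (xs i))%:E).
rewrite !int_pke_ge0 //; last 2 first.
- exact: measurable_funeneg.
- exact: measurable_funepos.
rewrite funerpos funerneg /=.
under eq_bigr do rewrite -EFinM.
under [X in (_ - X)%E]eq_bigr do rewrite -EFinM.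
rewrite !sumEFin -EFinB; congr EFin; rewrite -sumrB; apply: eq_bigr => i _.
by rewrite -mulrBr; congr (_ * _); rewrite -[in RHS](funrposBneg phi).
Qed.
Lemma int_bnd (R : realType) d (T : measurableType d) (P : probability T R)
  (f : T -> R) (M : R) :
  measurable_fun setT f -> (forall x, `|f x| <= M) -> P.-integrable setT (EFin \o f).
Proof.
move=> mf fM; apply/integrableP; split; first exact/measurable_EFinP.
apply: (@le_lt_trans _ _ (\int[P]_x (cst M%:E) x)%E).
  apply: ge0_le_integral => //.
  - by apply/measurableT_comp => //; exact/measurable_EFinP.
  - by move=> x _ /=; rewrite lee_fin; exact: fM.
have PT : ((P : {measure set T -> \bar R}) setT = 1)%E by exact: probability_setT.
by rewrite integral_cst // PT mule1 ltry.
Qed.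

Lemma int_indsum (R : realType) dS (S : measurableType dS) (p : probability S R) k
  (Cs : 'I_k -> set S) (mC : forall i, measurable (Cs i)) (a : 'I_k -> R) :
  measurable_fun setT (fun y => \sum_(i < k) a i * \1_(Cs i) y) /\
  (\int[p]_y (\sum_(i < k) a i * \1_(Cs i) y)%:E =
     (\sum_(i < k) a i * fine (p (Cs i)))%:E)%E.
Proof.
have mf i : measurable_fun setT (fun y => a i * \1_(Cs i) y).
  by apply: measurable_funM => //; exact: measurable_indic.
split; first exact: measurable_sum.
have intf i : p.-integrable setT (EFin \o (fun y => a i * \1_(Cs i) y)).
  apply: (@int_bnd _ _ _ _ _ `|a i|) => // y.
  by rewrite normrM ler_piMr // indicE; case: (_ \in _); rewrite ?normr1 ?normr0.
under eq_integral do rewrite -sumEFin.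
rewrite integral_sum //.
rewrite -sumEFin; apply: eq_bigr => i _.
have intI : p.-integrable setT (EFin \o (\1_(Cs i) : S -> R)).
  apply: (@int_bnd _ _ _ _ _ 1) => // y.
  by rewrite indicE; case: (_ \in _); rewrite ?normr1 ?normr0.
under eq_integral do rewrite EFinM.
rewrite (integralZl _ intI) // integral_indic // setIT.
by rewrite EFinM fineK // fin_num_measure.
Qed.
Lemma aux_div (R : realType) (Z s : R) : 0 <= Z <= 1 -> `|s| <= Z -> `|s - s / Z| <= 1 - Z.
Proof.
move=> /andP[Z0 Z1] sZ.
have [Ze|Znz] := eqVneq Z 0.
  rewrite Ze in sZ *.
  by move: sZ; rewrite normr_le0 => /eqP ->; rewrite mul0r subrr normr0 subr0.
have Zp : 0 < Z by rewrite lt_neqAle eq_sym Znz.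
rewrite (_ : s - s / Z = (s * (Z - 1)) / Z); last by field.
rewrite normrM normfV (ger0_norm Z0) normrM (ler0_norm (x := Z - 1)); last by rewrite subr_le0.
rewrite ler_pdivrMr //.
have := normr_ge0 s; nra.
Qed.

Lemma dBL_bound (R : realType) (dS : measure_display) (S : measurableType dS)
  (d : S -> S -> R) (Hmetric : is_metric d)
  (Hborel : (@measurable _ S) = <<s d_open d >>)
  (p : probability S R) (eps : R) (k : nat) (xs : 'I_k -> S) (Cs : 'I_k -> set S)
  (mC : forall i, measurable (Cs i))
  (disj : forall i j, i != j -> Cs i `&` Cs j = set0)
  (sub : forall i, Cs i `<=` dball d (xs i) eps) :
  (dBL d p (pke p xs Cs) <=
    (eps * (\sum_(i < k) fine (p (Cs i))) + 2 * (1 - \sum_(i < k) fine (p (Cs i))))%:E)%E.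
Proof.
have ZE : (\sum_(i < k) fine (p (Cs i)))%:E = p (\big[setU/set0]_(i < k) Cs i).
  rewrite measure_bigsetU_ord //; last first.
    by apply/trivIsetP => i j _ _ ij; rewrite disj.
  rewrite -sumEFin; apply: eq_bigr => i _.
  by rewrite fineK // fin_num_measure.
have mU : measurable (\big[setU/set0]_(i < k) Cs i).
  by apply: bigsetU_measurable => i _.
have Z01 : 0 <= \sum_(i < k) fine (p (Cs i)) <= 1.
  apply/andP; split; rewrite -lee_fin ZE; first exact: measure_ge0.
  exact: probability_le1.
set Zs := \sum_(i < k) fine (p (Cs i)) in ZE Z01 *.
apply: ge_ereal_sup => _ [phi hphi <-].
have [b1 lip] := BL_props Hmetric hphi.
have mphi := lip_meas Hborel lip.
rewrite int_pke // -/Zs.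
have [mg gE] := int_indsum p mC (fun i => phi (xs i)).
have [mh hE] := int_indsum p mC (fun i => eps - 1).
set g := (fun y => \sum_(i < k) phi (xs i) * \1_(Cs i) y) in mg gE.
set h := (fun y => \sum_(i < k) (eps - 1) * \1_(Cs i) y) in mh hE.
have key y : `|g y| <= 1 /\ `|phi y - g y| <= 1 + h y /\ `|h y| <= `|eps - 1|.
  have [[i Ci]|nC] := pselect (exists i, Cs i y).
    have oth j : j != i -> \1_(Cs j) y = 0 :> R.
      move=> ji; rewrite indicE memNset // => Cj.
      by have := disj j i ji; rewrite -subset0 => /(_ y) /=; apply.
    have -> : g y = phi (xs i).
      rewrite /g (bigD1 i) //= big1 ?addr0; first by rewrite indicE mem_set // mulr1.
      by move=> j ji; rewrite oth // mulr0.
    have -> : h y = eps - 1.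
      rewrite /h (bigD1 i) //= big1 ?addr0; first by rewrite indicE mem_set // mulr1.
      by move=> j ji; rewrite oth // mulr0.
    split; first exact: b1.
    split; last by [].
    have := sub i y Ci; rewrite /dball /= => dlt.
    rewrite distrC; have := lip (xs i) y; lra.
  have z j : \1_(Cs j) y = 0 :> R.
    by rewrite indicE memNset // => Cj; apply: nC; exists j.
  have -> : g y = 0 by rewrite /g big1 // => j _; rewrite z mulr0.
  have -> : h y = 0 by rewrite /h big1 // => j _; rewrite z mulr0.
  rewrite normr0 subr0 addr0; split; [exact: ler01| split; [exact: b1|exact: normr_ge0]].
have intphi : p.-integrable setT (EFin \o phi) by exact: (@int_bnd _ _ _ _ _ 1).
have intg : p.-integrable setT (EFin \o g).
  by apply: (@int_bnd _ _ _ _ _ 1) => // y; have [] := key y.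
have mpg : measurable_fun setT (fun y => phi y - g y) by exact: measurable_funB.
have intpg : p.-integrable setT (EFin \o (fun y => phi y - g y)).
  apply: (@int_bnd _ _ _ _ _ 2) => // y.
  apply: le_trans (ler_normB _ _) _; have [g1 _] := key y; have := b1 y; lra.
have gE' : (\int[p]_y (g y)%:E = (\sum_(i < k) phi (xs i) * fine (p (Cs i)))%:E)%E := gE.
have hE' : (\int[p]_y (h y)%:E = ((eps - 1) * Zs)%:E)%E.
  by rewrite hE big_distrr.
have Jdef : (\int[p]_y (phi y - g y)%:E = \int[p]_y (phi y)%:E - \int[p]_y (g y)%:E)%E.
  by under eq_integral do rewrite EFinB; exact: integralB_EFin.
have Jfin : (\int[p]_y (phi y - g y)%:E)%E \is a fin_num by exact: integrable_fin_num.
have gfin : (\int[p]_y (g y)%:E)%E \is a fin_num by exact: integrable_fin_num.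
have E1 : (\int[p]_y (phi y)%:E = \int[p]_y (phi y - g y)%:E + \int[p]_y (g y)%:E)%E.
  by rewrite Jdef subeK.
have Jb : (`|\int[p]_y (phi y - g y)%:E| <= (1 + (eps - 1) * Zs)%:E)%E.
  have mJ : measurable_fun setT (EFin \o (fun y => phi y - g y)) by exact/measurable_EFinP.
  apply: le_trans (le_abse_integral p measurableT mJ) _.
  apply: (@le_trans _ _ (\int[p]_y (1 + h y)%:E)%E).
    apply: ge0_le_integral => //.
    - by apply/measurableT_comp => //; exact/measurable_EFinP.
    - by apply/measurable_EFinP; apply: measurable_funD.
    - by move=> y _ /=; rewrite lee_fin; exact: (proj1 (proj2 (key y))).
  rewrite le_eqVlt; apply/orP; left; apply/eqP.
  under eq_integral do rewrite EFinD.
  rewrite integralD //; last first.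
    by apply: (@int_bnd _ _ _ _ _ (`|eps - 1|)) => // y; have [_ [_ ]] := key y.
    exact: finite_measure_integrable_cst.
  have PT : ((p : {measure set S -> \bar R}) setT = 1)%E by exact: probability_setT.
  by rewrite integral_cst // PT mule1 hE'.
set S1 := \sum_(i < k) phi (xs i) * fine (p (Cs i)) in E1 gE'.
set S2 := \sum_(i < k) fine (p (Cs i)) / Zs * phi (xs i).
have S2E : S2 = S1 / Zs.
  by rewrite /S2 /S1 big_distrl /=; apply: eq_bigr => i _; rewrite mulrC mulrA.
have S1b : `|S1| <= Zs.
  rewrite /S1 /Zs; apply: le_trans (ler_norm_sum _ _ _) _; apply: ler_sum => i _.
  rewrite normrM (ger0_norm (fine_ge0 (measure_ge0 _ _))).
  by apply: ler_piMl => //; apply: fine_ge0; exact: measure_ge0.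
have hs := aux_div Z01 S1b.
rewrite E1 gE' -(fineK Jfin).
rewrite -(fineK Jfin) abse_EFin lee_fin in Jb.
set j := fine _ in Jb *.
have -> : (j%:E + S1%:E - S2%:E = (j + S1 - S2)%:E)%E by [].
rewrite abse_EFin lee_fin.
rewrite S2E -addrA; apply: le_trans (ler_normD _ _) _; lra.
Qed.


Lemma ball_meas (R : realType) (dS : measure_display) (S : measurableType dS)
  (d : S -> S -> R) (Hmetric : is_metric d)
  (Hborel : (@measurable _ S) = <<s d_open d >>) x e :
  measurable (dball d x e).
Proof.
rewrite Hborel; apply: sub_sigma_algebra => y /= dxy.
exists (e - d x y); first by rewrite subr_gt0.
move=> z; rewrite /dball /= => dyz.
have [_ [_ tri]] := Hmetric; have := tri x y z; lra.
Qed.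

Definition pfm (R : realType) d (T : measurableType d) d' (T' : measurableType d')
  (P : {measure set T -> \bar R}) (f : T -> T') (mf : measurable_fun setT f) :
  {measure set T' -> \bar R}.
Proof. refine (pushforward P f). exact: mf. Defined.

Lemma bigcapT_big (I : finType) T (F : I -> set T) :
  \bigcap_(i in [set: I]) F i = \big[setI/setT]_(i : I) F i.
Proof.
apply/seteqP; split => x.
- by move=> h; elim/big_rec: _ => // i A _ IH; split => //; exact: h.
- move=> + i _; rewrite (bigD1 i) //=; by case.
Qed.

Lemma prod_option (R : realType) k (F : option 'I_k -> \bar R) :
  (\prod_(o : option 'I_k) F o = F None * \prod_(i : 'I_k) F (Some i))%E.
Proof.
rewrite (bigD1 None) //=; congr (_ * _)%E.
rewrite (reindex_omap Some id) /=; last by case.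
by apply: eq_bigl => i /=; rewrite eqxx.
Qed.

Lemma aux_lt (R : realType) (a b c r e : R) :
  c < r -> r < (e - b) / 2 -> a <= b + c -> a < e - r.
Proof. lra. Qed.

Lemma aux_lt2 (R : realType) (a c t r e : R) :
  a < e - r -> c < r -> t <= a + c -> t < e.
Proof. lra. Qed.

Lemma indep_fubini (R : realType) (dS : measure_display) (S : measurableType dS)
  (d : S -> S -> R)
  (Hmetric : is_metric d)
  (Hborel : (@measurable _ S) = <<s d_open d >>)
  (Hsep : d_separable d)
  (p : probability S R)
  (eps : R) (k : nat)
  (dO : measure_display) (O : measurableType dO) (P : probability O R)
  (X0 : O -> S) (X : 'I_k -> O -> S)
  (HX0m : measurable_fun setT X0) (HXm : forall i, measurable_fun setT (X i))
  (Hindep : mutual_indep P (extfam X0 X))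
  (Hlaw : forall o A, measurable A -> P (extfam X0 X o @^-1` A) = p A) :
  measurable_fun [set: O] (fun w => p (\bigcup_(i in [set: 'I_k]) dball d (X i w) eps)) /\
  P [set w | exists i, dball d (X i w) eps (X0 w)] =
    (\int[P]_w p (\bigcup_(i in [set: 'I_k]) dball d (X i w) eps))%E.
Proof.
have [dxx [dsym tri]] := Hmetric.
pose f := fun w : O => (w, X0 w).
have mf : measurable_fun setT f by apply: measurable_fun_pair => //; exact: measurable_id.
pose Pi := [set B : set O | exists A : 'I_k -> set S,
  (forall i, measurable (A i)) /\ B = \bigcap_(i in [set: 'I_k]) (X i @^-1` A i)].
pose Rect := [set E : set (O * S) | exists B A, [/\ Pi B, measurable A & E = B `*` A]].
have mPi B : Pi B -> measurable B.
  move=> [A [mA ->]]; rewrite bigcapT_big; apply: bigsetI_measurable => i _.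
  by rewrite -[X in measurable X]setTI; exact: HXm.
have mRect : Rect `<=` measurable.
  by move=> _ [B [A [PB mA ->]]]; apply: measurableX => //; exact: mPi.
have RectI : setI_closed Rect.
  move=> _ _ [B1 [A1 [[F1 [mF1 ->]] mA1 ->]]] [B2 [A2 [[F2 [mF2 ->]] mA2 ->]]].
  exists (\bigcap_(i in [set: 'I_k]) X i @^-1` (F1 i `&` F2 i)), (A1 `&` A2); split.
  - by exists (fun i => F1 i `&` F2 i); split => // i; exact: measurableI.
  - exact: measurableI.
  - rewrite -setXI; congr (_ `*` _); apply/seteqP; split => w /=.
    + by move=> [h1 h2] i _; split; [exact: h1|exact: h2].
    + by move=> h; split => i _; have [] := h i I.
have PT : ((P : {measure set O -> \bar R}) setT = 1)%E by exact: probability_setT.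
have indep B A : Pi B -> measurable A -> P (B `&` X0 @^-1` A) = (P B * p A)%E.
  move=> [F [mF ->]] mA.
  have h1 := Hindep (fun o => if o is Some i then F i else A).
  have h2 := Hindep (fun o => if o is Some i then F i else setT).
  rewrite prod_option /= in h1; rewrite prod_option /= in h2.
  have e1 : \bigcap_(o in [set: option 'I_k]) extfam X0 X o @^-1` (if o is Some i then F i else A)
     = (\bigcap_(i in [set: 'I_k]) X i @^-1` F i) `&` X0 @^-1` A.
    apply/seteqP; split => w /=.
    + by move=> h; split; [move=> i _; exact: (h (Some i))|exact: (h None)].
    + by move=> [h hA] [i|] _ //=; exact: h.
  have e2 : \bigcap_(o in [set: option 'I_k]) extfam X0 X o @^-1` (if o is Some i then F i else setT)
     = (\bigcap_(i in [set: 'I_k]) X i @^-1` F i).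
    apply/seteqP; split => w /=.
    + by move=> h i _; exact: (h (Some i)).
    + by move=> h [i|] _ //=; exact: h.
  rewrite e1 in h1; rewrite e2 in h2.
  rewrite h1 ?h2; last 2 first.
  - by case.
  - by case.
  have hA : P (X0 @^-1` A) = p A := Hlaw None A mA.
  have hT : P (X0 @^-1` setT) = 1%E.
    by rewrite (Hlaw None setT) //; exact: probability_setT.
  by rewrite hA hT mul1e muleC.
pose m1 := pfm P mf.
pose m2 := (P \x p)%E.
have agree E : Rect E -> m1 E = m2 E.
  move=> [B [A [PB mA ->]]].
  rewrite /m2 product_measure1E //; last exact: mPi.
  exact: indep.
have Rect_setT : Rect setT.
  exists setT, setT; split => //; last by rewrite setXTT.
  exists (fun _ => setT); split => //; apply/seteqP; split => // w _ i _.
have cover : \bigcup_(n : nat) (fun=> [set: O * S]) n = setT.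
  by apply/seteqP; split => // z _; exists 0%N.
have fin1 : forall n : nat, (m1 ((fun=> [set: O * S]) n) < +oo)%E.
  by move=> _; rewrite /m1 /= /pushforward preimage_setT PT ltry.
have uniq := g_sigma_algebra_measure_unique Rect mRect (fun=> setT) (fun=> Rect_setT) cover m1 m2 RectI agree fin1.
pose G' := \bigcup_(i in [set: 'I_k]) [set z : O * S | d (X i z.1) z.2 < eps].
have [g gs] : exists g : nat -> S, forall x e, 0 < e -> exists m, d x (g m) < e.
  case: Hsep => D [cD dense].
  have /pcard_surjP[g gsurj] := cD.
  exists g => x e e0; have [y Dy dxy] := dense x e e0.
  by have [m _ gm] := gsurj y Dy; exists m; rewrite gm.
have GR : <<s Rect >> G'.
  have ball_m c r : measurable (dball d c r) := ball_meas Hmetric Hborel c r.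
  suff : measurable (G' : set (g_sigma_algebraType Rect)) by [].
  rewrite /G' bigcupT_big; apply: bigsetU_measurable => i _.
  have -> : [set z : O * S | d (X i z.1) z.2 < eps] = \bigcup_m \bigcup_n
      ((X i @^-1` dball d (g m) (eps - n.+1%:R^-1)) `*` dball d (g m) n.+1%:R^-1).
    apply/seteqP; split => [[w x] /= hlt|[w x] /= [m _ [n _ [/= h1 h2]]]].
    + pose de := eps - d (X i w) x.
      have de0 : 0 < de / 2 by rewrite divr_gt0 // subr_gt0.
      have [N _ hN] := near_infty_natSinv_lt (PosNum de0).
      have rN := hN N (leqnn N); rewrite /= in rN.
      have r0 : 0 < N.+1%:R^-1 :> R by rewrite invr_gt0 ltr0n.
      have [m hm] := gs x _ r0.
      exists m => //; exists N => //; split => /=.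
      * rewrite /dball /= dsym; have := tri (X i w) x (g m); rewrite /de in rN.
        exact: aux_lt hm rN.
      * by rewrite /dball /= dsym.
    + rewrite /dball /= dsym in h1 h2; exact: aux_lt2 h1 h2 (tri _ (g m) _).
  apply: bigcupT_measurable => m; apply: bigcupT_measurable => n.
  change (<<s Rect >> ((X i @^-1` dball d (g m) (eps - n.+1%:R^-1)) `*` dball d (g m) n.+1%:R^-1)).
  apply: sub_sigma_algebra.
  exists (X i @^-1` dball d (g m) (eps - n.+1%:R^-1)), (dball d (g m) n.+1%:R^-1); split => //.
  exists (fun j => if j == i then dball d (g m) (eps - n.+1%:R^-1) else setT); split.
    by move=> j; case: ifP.
  apply/seteqP; split => w /=.
  - by move=> h j _; case: ifP => // /eqP ->.
  - by move=> h; have := h i I; rewrite eqxx.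
have mG' : measurable G' by exact: (smallest_sub (@sigma_algebra_measurable _ _) mRect GR).
have xsE w : xsection G' w = \bigcup_(i in [set: 'I_k]) dball d (X i w) eps.
  apply/seteqP; split => y; rewrite /xsection /= in_setE /=.
  - by move=> [i _ h]; exists i.
  - by move=> [i _ h]; exists i.
split.
- have := measurable_fun_xsection p mG'.
  by rewrite (_ : (fun A => p \o xsection A) G' = fun w => p (\bigcup_(i in [set: 'I_k]) dball d (X i w) eps)) //; apply/funext => w /=; rewrite xsE.
- have e : f @^-1` G' = [set w | exists i, dball d (X i w) eps (X0 w)].
    by apply/seteqP; split => w /=; [move=> [i _ h]; exists i|move=> [i h]; exists i].
  have := uniq G' GR; rewrite /m1 /m2 /= /pushforward /product_measure1 e => ->.
  by apply: eq_integral => w _ /=; rewrite xsE.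
Qed.


Unset Implicit Arguments.

Theorem lemma3p11 (R : realType) (dS : measure_display) (S : measurableType dS)
  (d : S -> S -> R)
  (Hmetric : is_metric d)
  (Hborel : (@measurable _ S) = <<s d_open d >>)
  (Hcomplete : d_complete d) (Hsep : d_separable d)
  (p : probability S R)
  (eps : R) (Heps : 0 < eps) (k : nat)
  (dO : measure_display) (O : measurableType dO) (P : probability O R)
  (X0 : O -> S) (X : 'I_k -> O -> S)
  (HX0m : measurable_fun setT X0) (HXm : forall i, measurable_fun setT (X i))
  (Hindep : mutual_indep P (extfam X0 X))
  (Hlaw : forall o A, measurable A -> P (extfam X0 X o @^-1` A) = p A)
  (C : 'I_k -> O -> set S)
  (HCm : forall i w, measurable (C i w))
  (HCdisj : forall i j w, i != j -> C i w `&` C j w = set0)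
  (HCsub : forall i w, C i w `<=` dball d (X i w) eps)
  (HCcov : forall w, \bigcup_(i in [set: 'I_k]) C i w
                     = \bigcup_(i in [set: 'I_k]) dball d (X i w) eps) :
  let pek := P [set w | exists i, dball d (X i w) eps (X0 w)] in
  (\int[P]_w dBL d p (pke p (fun i => X i w) (fun i => C i w))
     <= eps%:E * pek + 2%:E * (1 - pek))%E.
Proof.
cbv zeta.
set pek := P [set w | _].
pose U w := \bigcup_(i in [set: 'I_k]) dball d (X i w) eps.
have [mpU pekE] := indep_fubini Hmetric Hborel Hsep eps HX0m HXm Hindep Hlaw.
rewrite -/pek in pekE.
have mU w : measurable (U w).
  rewrite /U bigcupT_big; apply: bigsetU_measurable => i _.
  exact: ball_meas.
pose Z w := fine (p (U w)).
have pUE w : p (U w) = (Z w)%:E.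
  by rewrite /Z fineK // fin_num_measure.
have ZE w : Z w = \sum_(i < k) fine (p (C i w)).
  apply: EFin_inj; rewrite -pUE /U -HCcov bigcupT_big.
  rewrite measure_bigsetU_ord //; last first.
    by apply/trivIsetP => i j _ _ ij; rewrite HCdisj.
  rewrite -sumEFin; apply: eq_bigr => i _.
  by rewrite fineK // fin_num_measure.
have Z01 w : 0 <= Z w <= 1.
  apply/andP; split; rewrite -lee_fin -pUE; first exact: measure_ge0.
  exact: probability_le1.
have bnd w : (dBL d p (pke p (X^~ w) (C^~ w)) <= (eps * Z w + 2 * (1 - Z w))%:E)%E.
  rewrite ZE; apply: dBL_bound => //.
  by move=> i j; exact: HCdisj.
apply: le_trans (le_integral_nm P (fun w => dBL_ge0 _ _ _) bnd) _.
have mZ : measurable_fun setT Z.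
  exact: (measurableT_comp (fine_measurable _) mpU).
have intZ : P.-integrable setT (EFin \o Z).
  apply/integrableP; split; first exact/measurable_EFinP.
  apply: (@le_lt_trans _ _ (\int[P]_x (cst 1%:E) x)%E).
    apply: ge0_le_integral => //.
    - by apply/measurableT_comp => //; exact/measurable_EFinP.
    - move=> w _ /=; rewrite lee_fin.
      by have /andP[h0 h1] := Z01 w; rewrite ger0_norm.
  by rewrite integral_cst // mul1e (le_lt_trans (probability_le1 P measurableT)) ?ltry.
have pekZ : pek = (\int[P]_w (Z w)%:E)%E.
  by rewrite pekE; apply: eq_integral => w _; rewrite pUE.
have intZ' : P.-integrable setT (EFin \o (fun w => (eps - 2) * Z w)).
  have -> : (EFin \o (fun w => (eps - 2) * Z w)) = (fun w => (eps - 2)%R%:E * (EFin \o Z) w)%E.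
    by apply/funext => w /=; rewrite EFinM.
  exact: integrableZl.
have -> : (\int[P]_w (eps * Z w + 2 * (1 - Z w))%R%:E = 2%:E + (eps - 2)%R%:E * pek)%E.
  transitivity (\int[P]_w ((EFin \o cst 2%R) w + (EFin \o (fun w => ((eps - 2) * Z w)%R)) w))%E.
    by apply: eq_integral => w _ /=; rewrite -EFinD; congr EFin; ring.
  rewrite integralD //; last exact: finite_measure_integrable_cst.
  rewrite (_ : EFin \o cst 2%R = cst 2%:E) // integral_cst //.
  have PT : ((P : {measure set O -> \bar R}) setT = 1)%E by exact: probability_setT.
  rewrite PT mule1; congr (_ + _)%E.
  rewrite pekZ -(integralZl measurableT intZ); congr integral.
have pfin : pek \is a fin_num by rewrite pekZ; exact: integrable_fin_num.
rewrite -(fineK pfin); set q := fine pek.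
have -> : (2 + (eps - 2)%R%:E * q%:E = (2 + (eps - 2) * q)%R%:E)%E by [].
have -> : (eps%:E * q%:E + 2 * (1 - q%:E) = (eps * q + 2 * (1 - q))%R%:E)%E.
  by [].
rewrite lee_fin.
rewrite le_eqVlt; apply/orP; left; apply/eqP; ring.
Qed.
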